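(* Let $(\mathcal G,p)$ be a $1$-closed CPS on the finite set $\Omega$ with $\mathcal G$ closed under unions and nonempty intersections and covering $\Omega$. Then $(\mathcal G,p)$ satisfies certainty reflection if and only if for every state $\omega'$ and every state $\omega$ such that $m(\omega')\subsetneq m(\omega)$, we have $p_{m(\omega)}(m(\omega'))=1$.
   Context: $\Omega$ is a finite set; every subset is an event. A CPS is a pair $(\mathcal G,p)$ where $\mathcal G$ is a family of nonempty subsets of $\Omega$ and $p$ assigns to each $G\in\mathcal G$ a probability measure $p_G$ on $\Omega$ with $p_G(G)=1$ and $p_G(E)=p_G(F)p_F(E)$ whenever $E\subseteq F\subseteq G$, $F,G\in\mathcal G$. Atom: $m(\omega)=\bigcap\{G\in\mathcal G:\omega\in G\}$. $(\mathcal G,p)$ is $1$-closed if every $L\subseteq G$ with $G\in\mathcal G$ and $p_G(L)=1$ belongs to $\mathcal G$. Certainty reflection: for every event $E$, every $q\in[0,1]$ and every $\omega$, $p_{m(\omega)}(E)=q$ implies $p_{m(\omega)}(\{\omega'\in\Omega:p_{m(\omega')}(E)=q\})=1$. *)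

(* Defs.v *)
From mathcomp Require Import all_boot all_order all_algebra.
Set Implicit Arguments. Unset Strict Implicit. Unset Printing Implicit Defensive.
Import Order.TTheory GRing.Theory Num.Theory.
Local Open Scope ring_scope.

(* A CPS is a family G of nonempty subsets together with
   a map p assigning to each G in G a measure p G (values of p outside G
   are irrelevant). *)

Section CPS.
Variables (R : realFieldType) (Omega : finType).

Definition prob (mu : {ffun Omega -> R}) (E : {set Omega}) : R :=
  \sum_(x in E) mu x.

Definition is_prob_measure (mu : {ffun Omega -> R}) : Prop :=
  (forall x, 0 <= mu x) /\ \sum_x mu x = 1.

Definition is_CPS (G : {set {set Omega}}) (p : {set Omega} -> {ffun Omega -> R}) : Prop :=
  [/\ forall A, A \in G -> A != set0,
      forall A, A \in G -> is_prob_measure (p A),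
      forall A, A \in G -> prob (p A) A = 1 &
      forall (E F A : {set Omega}), F \in G -> A \in G -> E \subset F -> F \subset A ->
        prob (p A) E = prob (p A) F * prob (p F) E ].

Definition atom (G : {set {set Omega}}) (w : Omega) : {set Omega} :=
  \bigcap_(A in G | w \in A) A.

Definition one_closed (G : {set {set Omega}}) (p : {set Omega} -> {ffun Omega -> R}) : Prop :=
  forall A L : {set Omega}, A \in G -> L \subset A -> prob (p A) L = 1 -> L \in G.

Definition union_closed (G : {set {set Omega}}) : Prop :=
  forall A B, A \in G -> B \in G -> A :|: B \in G.

Definition nonempty_inter_closed (G : {set {set Omega}}) : Prop :=
  forall A B, A \in G -> B \in G -> A :&: B != set0 -> A :&: B \in G.

Definition covers (G : {set {set Omega}}) : Prop :=
  forall w : Omega, exists2 A, A \in G & w \in A.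

Definition certainty_reflection (G : {set {set Omega}})
    (p : {set Omega} -> {ffun Omega -> R}) : Prop :=
  forall (E : {set Omega}) (q : R) (w : Omega), 0 <= q <= 1 ->
    prob (p (atom G w)) E = q ->
    prob (p (atom G w)) [set w' | prob (p (atom G w')) E == q] = 1.

End CPS.

(* Main.v *)
Require Import Defs.
From mathcomp Require Import all_boot all_order all_algebra.
Import Order.TTheory GRing.Theory Num.Theory.
Local Open Scope ring_scope.

Section Helpers.
Variables (R : realFieldType) (Omega : finType).
Implicit Types (mu : {ffun Omega -> R}) (E F X : {set Omega}).

Lemma prob_split mu E X :
  prob mu E = prob mu (E :&: X) + prob mu (E :\: X).
Proof. by rewrite /prob (big_setID X). Qed.

Lemma prob_ge0 mu E : (forall x, 0 <= mu x) -> 0 <= prob mu E.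
Proof. by move=> h; apply: sumr_ge0. Qed.

Lemma prob_mono mu E F : (forall x, 0 <= mu x) -> E \subset F ->
  prob mu E <= prob mu F.
Proof.
move=> h sEF; rewrite (prob_split mu F E).
have -> : F :&: E = E by apply/setIidPr.
by rewrite lerDl prob_ge0.
Qed.

Lemma prob_compl mu E : is_prob_measure mu -> prob mu E + prob mu (~: E) = 1.
Proof.
case=> h1 h2; rewrite -h2 (bigID (fun x => x \in E)) /=.
by rewrite /prob; congr (_ + _); apply: eq_bigl => x; rewrite ?in_setC ?andTb.
Qed.

Lemma prob_le1 mu E : is_prob_measure mu -> prob mu E <= 1.
Proof.
move=> hm; rewrite -(prob_compl mu E hm) lerDl prob_ge0 //; by case: hm.
Qed.

Lemma prob0_pt mu E x : (forall y, 0 <= mu y) -> prob mu E = 0 -> x \in E -> mu x = 0.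
Proof. by move=> h h0 xE; apply: (psumr_eq0P _ h0). Qed.

Lemma prob_restrict mu E X : is_prob_measure mu -> prob mu X = 1 ->
  prob mu (E :&: X) = prob mu E.
Proof.
move=> hm hX; rewrite [RHS](prob_split mu E X).
have c0 : prob mu (~: X) = 0.
  by move: (prob_compl mu X hm); rewrite hX => /eqP; rewrite -{2}(addr0 1) => /eqP /addrI.
suff -> : prob mu (E :\: X) = 0 by rewrite addr0.
apply/eqP; rewrite eq_le prob_ge0 ?andbT; last by case: hm.
rewrite -c0; apply: prob_mono; first by case: hm.
by rewrite setDE subsetIr.
Qed.

End Helpers.
Arguments prob_split {R Omega}.
Arguments prob_ge0 {R Omega}.
Arguments prob_mono {R Omega}.
Arguments prob_compl {R Omega}.
Arguments prob_le1 {R Omega}.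
Arguments prob0_pt {R Omega}.
Arguments prob_restrict {R Omega}.

Section Atoms.
Variables (Omega : finType) (G : {set {set Omega}}).

Lemma atom_self w : w \in atom G w.
Proof. by apply/bigcapP => A /andP[]. Qed.

Lemma atom_min A w : A \in G -> w \in A -> atom G w \subset A.
Proof. by move=> AG wA; apply: (bigcap_inf A) => /=; rewrite AG wA. Qed.

Lemma atom_in w : nonempty_inter_closed G -> covers G -> atom G w \in G.
Proof.
move=> hI hC; case: (hC w) => A0 A0G wA0.
have -> : atom G w = A0 :&: atom G w.
  by apply/esym/setIidPr/atom_min.
rewrite /atom.
pose P (X : {set Omega}) := (w \in X) && (A0 :&: X \in G).
suff /andP[] : P (\bigcap_(A in G | w \in A) A) by [].
apply: (big_ind P).
- by rewrite /P in_setT setIT A0G.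
- move=> X Y /andP[wX hX] /andP[wY hY]; rewrite /P inE wX wY /=.
  have -> : A0 :&: (X :&: Y) = (A0 :&: X) :&: (A0 :&: Y).
    by rewrite setIACA setIid.
  apply: hI => //; apply/set0Pn; exists w; by rewrite !inE wA0 wX wY.
- move=> A /andP[AG wA]; rewrite /P wA /=; apply: hI => //.
  by apply/set0Pn; exists w; rewrite inE wA0 wA.
Qed.

End Atoms.
Arguments atom_self {Omega}.
Arguments atom_min {Omega G}.
Arguments atom_in {Omega G}.

Theorem theorem5 (R : realFieldType) (Omega : finType)
  (G : {set {set Omega}}) (p : {set Omega} -> {ffun Omega -> R}) :
  is_CPS G p -> one_closed G p -> union_closed G ->
  nonempty_inter_closed G -> covers G ->
  (certainty_reflection G p <->
   forall w' w : Omega, atom G w' \proper atom G w ->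
     prob (p (atom G w)) (atom G w') = 1).
Proof.
move=> [hne hpm hfull hchain] h1 _ hI hC.
have aG w : atom G w \in G by apply: atom_in.
have pm w : is_prob_measure (p (atom G w)) by apply: hpm.
have nn w x : 0 <= p (atom G w) x by case: (pm w).
split.
- move=> CR w' w /properP[sub [x xA xE]].
  set A := atom G w; set E := atom G w'.
  case: (eqVneq (prob (p A) E) 1) => // hq.
  set q := prob (p A) E.
  have q01 : 0 <= q <= 1 by rewrite /q; apply/andP; split; [apply: prob_ge0; exact: nn | apply: prob_le1; exact: pm].
  have hT := CR E q w q01 erefl.
  set T := [set w'' | _] in hT.
  have cT : prob (p A) (~: T) = 0.
    by move: (prob_compl _ (~:T) (pm w)); rewrite setCK addrC hT => /eqP;
       rewrite -{2}(addr0 1) => /eqP /addrI.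
  have ET : E \subset ~: T.
    apply/subsetP => y yE; rewrite !inE.
    have sy : atom G y \subset E by exact: (atom_min _ _ (aG w') yE).
    have -> : prob (p (atom G y)) E = 1.
      apply/eqP; rewrite eq_le (prob_le1 _ _ (pm y)) /= -{1}(hfull _ (aG y)).
      exact: (prob_mono _ _ _ (nn y) sy).
    by rewrite eq_sym.
  have E0 : q = 0.
    apply/eqP; rewrite /q eq_le (prob_ge0 _ _ (nn w)) andbT -cT.
    exact: (prob_mono _ _ _ (nn w) ET).
  have AE1 : prob (p A) (A :\: E) = 1.
    rewrite setDE setIC (prob_restrict _ _ _ (pm w) (hfull _ (aG w))).
    by move: (prob_compl _ E (pm w)); rewrite -/q E0 add0r.
  have ADG : A :\: E \in G by apply: (h1 A) => //; [exact: aG | exact: subsetDl].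
  have wAE : w \in A :\: E.
    rewrite inE atom_self andbT; apply/negP => wE.
    by move: xE; rewrite (subsetP (atom_min _ _ (aG w') wE)). 
  have := subsetP (atom_min _ _ ADG wAE) w' (subsetP sub _ (atom_self G w')).
  by rewrite inE atom_self.
- move=> H E q w _ hq.
  set A := atom G w.
  set T := [set w'' | _].
  suff cT : prob (p A) (~: T) = 0.
    by move: (prob_compl _ T (pm w)); rewrite cT addr0.
  apply: big1 => x; rewrite inE => xT.
  apply/eqP; apply/negPn/negP => hx.
  have hA := prob_compl _ A (pm w); rewrite hfull // in hA.
  have cA : prob (p A) (~: A) = 0.
    by move/eqP: hA; rewrite -{2}(addr0 1) => /eqP /addrI.
  have xA : x \in A.
    apply/negPn/negP => xA; move/negP: hx; apply; apply/eqP.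
    by apply: (prob0_pt _ _ _ (nn w) cA); rewrite inE.
  have sxA : atom G x \subset A by exact: (atom_min _ _ (aG w) xA).
  apply/negP: xT; rewrite negbK inE.
  case: (eqVneq (atom G x) A) => [->|neq]; first by rewrite hq.
  have pr : atom G x \proper A by rewrite properEneq neq sxA.
  have h1x := H x w pr.
  have e1 := hchain (E :&: atom G x) (atom G x) A (aG x) (aG w) (subsetIr _ _) sxA.
  rewrite h1x mul1r (prob_restrict _ _ _ (pm w) h1x) (prob_restrict _ _ _ (pm x) (hfull _ (aG x))) in e1.
  by rewrite -e1 hq.
Qed.
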